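(* Let $A$ be a set and let $\mathcal{E}$ be a set of subsets of $A$ such that (C1) for every $K\subseteq A$, $K\in\mathcal{E}$ if and only if $A\setminus K\notin\mathcal{E}$; and (C2) if $K\in\mathcal{E}$ and $K\subseteq L\subseteq A$, then $L\in\mathcal{E}$. Suppose each member of $A$ chooses one of the six strict total orders on three candidates $a,b,c$, labelled by $\mathbb{Z}/6\mathbb{Z}$ as: $1: a>b>c$, $2: a>c>b$, $3: c>a>b$, $4: c>b>a$, $5: b>c>a$, $6: b>a>c$. For $p\in\mathbb{Z}/6\mathbb{Z}$ let $K(p)$ be the set of members who chose ranking $p$, and $K(p,q,r)=K(p)\cup K(q)\cup K(r)$. Define the collective preference by: for distinct candidates $x,y$, $x$ is collectively preferred to $y$ iff the set of members who rank $x$ above $y$ belongs to $\mathcal{E}$. If the collective preference is a strict total order on $\{a,b,c\}$, then there exists $p$ such that $K(p,p+1,p+2)\in\mathcal{E}$ and $K(p+1,p+2,p+3)\in\mathcal{E}$.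
   Context: Indices are taken modulo $6$. *)

(* Defs.v *)
From mathcomp Require Import all_boot.
Set Implicit Arguments. Unset Strict Implicit. Unset Printing Implicit Defensive.

Inductive cand := ca | cb | cc.

(* Rankings are labelled by residues 0..5 (i.e. 'I_6 = Z/6Z); label r here
   corresponds to label r+1 in the paper:
   0: a>b>c, 1: a>c>b, 2: c>a>b, 3: c>b>a, 4: b>c>a, 5: b>a>c. *)
(* pos r x = position of candidate x in ranking r (0 = top). *)
Definition pos (r : 'I_6) (x : cand) : nat :=
  match nat_of_ord r, x with
  | 0, ca => 0 | 0, cb => 1 | 0, cc => 2
  | 1, ca => 0 | 1, cc => 1 | 1, cb => 2
  | 2, cc => 0 | 2, ca => 1 | 2, cb => 2
  | 3, cc => 0 | 3, cb => 1 | 3, ca => 2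
  | 4, cb => 0 | 4, cc => 1 | 4, ca => 2
  | _, cb => 0 | _, ca => 1 | _, cc => 2
  end.

Definition ranks_above (r : 'I_6) (x y : cand) : Prop := (pos r x < pos r y)%N.

Definition Kp {A : Type} (prof : A -> 'I_6) (p : nat) : A -> Prop :=
  fun i => nat_of_ord (prof i) = p %% 6.

Definition K3 {A : Type} (prof : A -> 'I_6) (p q r : nat) : A -> Prop :=
  fun i => Kp prof p i \/ Kp prof q i \/ Kp prof r i.

Definition collective {A : Type} (E : (A -> Prop) -> Prop) (prof : A -> 'I_6)
  (x y : cand) : Prop :=
  x <> y /\ E (fun i => ranks_above (prof i) x y).

Definition strict_total_order (R : cand -> cand -> Prop) : Prop :=
  (forall x, ~ R x x) /\
  (forall x y z, R x y -> R y z -> R x z) /\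
  (forall x y, x <> y -> R x y \/ R y x).

(* Main.v *)
Require Import Defs.
From mathcomp Require Import all_boot.

Lemma incl (A : Type) (prof : A -> 'I_6) (x y : cand) (p : nat) :
  (forall r : 'I_6, (pos r x < pos r y)%N ->
     nat_of_ord r = p %% 6 \/ nat_of_ord r = p.+1 %% 6 \/ nat_of_ord r = p.+2 %% 6) ->
  forall i, ranks_above (prof i) x y -> K3 prof p p.+1 p.+2 i.
Proof. move=> H i; exact: H. Qed.

Ltac solve_r := let r := fresh in let Hr := fresh in
  move=> [r Hr]; do 6 (case: r Hr => [|r] Hr; first by (rewrite /pos /=; auto)); by [].

Theorem mainTheorem4 (A : Type) (E : (A -> Prop) -> Prop)
  (C1 : forall K : A -> Prop, E K <-> ~ E (fun i => ~ K i))
  (C2 : forall K L : A -> Prop, E K -> (forall i, K i -> L i) -> E L)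
  (prof : A -> 'I_6)
  (Hord : strict_total_order (collective E prof)) :
  exists p : nat, E (K3 prof p p.+1 p.+2) /\ E (K3 prof p.+1 p.+2 p.+3).
Proof.
  case: Hord => [Hirr [Htr Htot]].
  have top : forall x y z, collective E prof x y -> collective E prof x z ->
     E (fun i => ranks_above (prof i) x y) /\ E (fun i => ranks_above (prof i) x z).
    by move=> x y z [_ ?] [_ ?].
  have Tab := Htot ca cb ltac:(discriminate).
  have Tac := Htot ca cc ltac:(discriminate).
  have Tbc := Htot cb cc ltac:(discriminate).
  have Ha : collective E prof ca cb -> collective E prof ca cc ->
     exists p : nat, E (K3 prof p p.+1 p.+2) /\ E (K3 prof p.+1 p.+2 p.+3).
    move=> h1 h2; case: (top _ _ _ h1 h2) => e1 e2; exists 5; split.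
    - apply: (C2 _ _ e2); apply: incl; solve_r.
    - apply: (C2 _ _ e1); apply: incl; solve_r.
  have Hb : collective E prof cb ca -> collective E prof cb cc ->
     exists p : nat, E (K3 prof p p.+1 p.+2) /\ E (K3 prof p.+1 p.+2 p.+3).
    move=> h1 h2; case: (top _ _ _ h1 h2) => e1 e2; exists 3; split.
    - apply: (C2 _ _ e1); apply: incl; solve_r.
    - apply: (C2 _ _ e2); apply: incl; solve_r.
  have Hc : collective E prof cc ca -> collective E prof cc cb ->
     exists p : nat, E (K3 prof p p.+1 p.+2) /\ E (K3 prof p.+1 p.+2 p.+3).
    move=> h1 h2; case: (top _ _ _ h1 h2) => e1 e2; exists 1; split.
    - apply: (C2 _ _ e2); apply: incl; solve_r.
    - apply: (C2 _ _ e1); apply: incl; solve_r.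
  case: Tab => ab; case: Tac => ac; case: Tbc => bc; auto.
  - by case: (Hirr ca); apply: Htr ab (Htr _ _ _ bc ac).
  - by case: (Hirr ca); apply: Htr ac (Htr _ _ _ bc ab).
Qed.
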